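(* (i) Let $Q$ be a QNP and $\pi$ a policy for $Q$. If $\tau=s_0,s_1,\dots$ is an infinite $\pi$-trajectory of $Q$, then the sequence of boolean states $\bar\tau=\bar s_0,\bar s_1,\dots$ is an infinite $\pi$-trajectory of the FOND problem $P=T_D(Q)$. (ii) The converse fails: there exist a QNP $Q$, a policy $\pi$ for $Q$ and an infinite $\pi$-trajectory $\bar s_0,\bar s_1,\dots$ of $T_D(Q)$ (from its initial state) such that there is no infinite $\pi$-trajectory $s_0,s_1,\dots$ of $Q$ whose boolean states are $\bar s_0,\bar s_1,\dots$.
   Context: A qualitative numerical problem (QNP) is a tuple $Q=\langle F,V,I,O,G\rangle$ where $F$ is a finite set of propositional variables and $V$ a finite set of numerical variables taking non-negative real values. $F$-literals are $p,\neg p$; $V$-literals are $X=0$ and $X>0$. $I$ and $G$ are consistent sets of $F$- and $V$-literals. Each action $a\in O$ has a precondition $Pre(a)$ (set of $F$- and $V$-literals), propositional effects $\mathit{Eff}(a)$ (set of $F$-literals) and numerical effects $N(a)$ (atoms $Inc(X)$, $Dec(X)$, at most one per variable); if $Dec(X)\in N(a)$ then $X>0\in Pre(a)$. A state $s$ assigns a truth value to each $p\in F$ and a real $s[X]\ge0$ to each $X\in V$. Initial states satisfy $I$ under a closed-world assumption. $a$ is applicable in $s$ if $s$ satisfies $Pre(a)$; goal states satisfy $G$. For applicable $a$, $s'\in F(a,s)$ iff propositional effects are applied (other atoms unchanged), $s'[X]>s[X]$ if $Inc(X)\in N(a)$, $s'[X]<s[X]$ if $Dec(X)\in N(a)$,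 and $s'[X]=s[X]$ otherwise. A trajectory is a sequence $s_0,a_0,s_1,\dots$ with $s_0$ initial, $a_i$ applicable in $s_i$, $s_{i+1}\in F(a_i,s_i)$, which for some $\epsilon>0$ is an $\epsilon$-trajectory: for all $X,i$, $s_{i+1}[X]\ne s_i[X]$ implies $|s_{i+1}[X]-s_i[X]|\ge\epsilon$ or $0=s_{i+1}[X]<s_i[X]<\epsilon$. The boolean state $\bar s$ of $s$ is the truth valuation on the atoms $p\in F$ and $X=0$. A policy is a partial map $\pi$ from states to actions with $\pi(s)=\pi(s')$ whenever $\bar s=\bar s'$; a $\pi$-trajectory has $a_i=\pi(s_i)$. A FOND problem has propositional states, a unique initial state, and actions with possibly nondeterministic effects $E_1\mid\cdots\mid E_k$; a $\pi$-trajectory is a sequence $t_0,t_1,\dots$ from the initial state with $\pi(t_i)$ applicable and $t_{i+1}$ a possible successor. The direct translation $T_D(Q)$ is the FOND problem over $F\cup\{p_{X=0}:X\in V\}$ obtained by reading $X=0$ as $p_{X=0}$ and $X>0$ as $\neg p_{X=0}$ in $I$, $G$, preconditions, keeping propositional effects, replacing $Inc(X)$ by the deterministic effect $\neg p_{X=0}$ and $Dec(X)$ by the nondeterministic effect $\neg p_{X=0}\mid p_{X=0}$. Its states are the boolean states of $Q$ and $\pi$ is used on it via $\bar s\mapsto\pi(s)$. *)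

(* Defs.v *)
From Stdlib Require Import Reals List FinFun.
Import ListNotations.
Open Scope R_scope.
Set Implicit Arguments.

Inductive flit (F : Type) := FPos (p : F) | FNeg (p : F).
Inductive vlit (V : Type) := VZero (X : V) | VPos (X : V).
Inductive lit (F V : Type) := LF (l : flit F) | LV (l : vlit V).
Inductive neff := Inc | Dec.
Arguments FPos {F} p. Arguments FNeg {F} p.
Arguments VZero {V} X. Arguments VPos {V} X.
Arguments LF {F V} l. Arguments LV {F V} l.

Record qnp (F V O : Type) := {
  qI : list (lit F V);
  qG : list (lit F V);
  qPre : O -> list (lit F V);
  qEff : O -> list (flit F);
  qN : O -> list (V * neff)
}.

Definition consistent_lits (F V : Type) (L : list (lit F V)) : Prop :=
  (forall p, ~ (In (LF (FPos p)) L /\ In (LF (FNeg p)) L)) /\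
  (forall X, ~ (In (LV (VZero X)) L /\ In (LV (VPos X)) L)).

Definition wf_qnp (F V O : Type) (Q : qnp F V O) : Prop :=
  Finite F /\ Finite V /\ Finite O /\
  consistent_lits (qI Q) /\ consistent_lits (qG Q) /\
  (forall a, NoDup (map fst (qN Q a))) /\
  (forall a X, In (X, Dec) (qN Q a) -> In (LV (VPos X)) (qPre Q a)).

Record state (F V : Type) := { sP : F -> bool; sX : V -> R }.

Definition is_state (F V : Type) (s : state F V) : Prop := forall X, 0 <= sX s X.

Definition sat_lit (F V : Type) (s : state F V) (l : lit F V) : Prop :=
  match l with
  | LF (FPos p) => sP s p = true
  | LF (FNeg p) => sP s p = false
  | LV (VZero X) => sX s X = 0
  | LV (VPos X) => 0 < sX s X
  end.

Definition sat (F V : Type) (s : state F V) (L : list (lit F V)) : Prop :=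
  forall l, In l L -> sat_lit s l.

(** Initial states: satisfy I, closed world on the boolean atoms p and X=0. *)
Definition qinitial (F V O : Type) (Q : qnp F V O) (s : state F V) : Prop :=
  is_state s /\ sat s (qI Q) /\
  (forall p, ~ In (LF (FPos p)) (qI Q) -> sP s p = false) /\
  (forall X, ~ In (LV (VZero X)) (qI Q) -> sX s X <> 0).

Definition qgoal (F V O : Type) (Q : qnp F V O) (s : state F V) : Prop :=
  sat s (qG Q).

Definition qapplicable (F V O : Type) (Q : qnp F V O) (a : O) (s : state F V) : Prop :=
  sat s (qPre Q a).

Definition qsucc (F V O : Type) (Q : qnp F V O) (a : O) (s s' : state F V) : Prop :=
  is_state s' /\
  (forall p, In (FPos p) (qEff Q a) -> sP s' p = true) /\
  (forall p, In (FNeg p) (qEff Q a) -> ~ In (FPos p) (qEff Q a) -> sP s' p = false) /\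
  (forall p, ~ In (FPos p) (qEff Q a) -> ~ In (FNeg p) (qEff Q a) -> sP s' p = sP s p) /\
  (forall X,
     (In (X, Inc) (qN Q a) -> sX s X < sX s' X) /\
     (In (X, Dec) (qN Q a) -> sX s' X < sX s X) /\
     (~ In (X, Inc) (qN Q a) -> ~ In (X, Dec) (qN Q a) -> sX s' X = sX s X)).

Definition eps_traj (F V : Type) (s : nat -> state F V) (eps : R) : Prop :=
  forall X i, sX (s (S i)) X <> sX (s i) X ->
    Rabs (sX (s (S i)) X - sX (s i) X) >= eps \/
    (0 = sX (s (S i)) X /\ sX (s (S i)) X < sX (s i) X /\ sX (s i) X < eps).

(** Boolean state of s: valuation of the atoms p (inl p) and X=0 (inr X). *)
Definition bool_state (F V : Type) (s : state F V) : F + V -> bool :=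
  fun x => match x with
           | inl p => sP s p
           | inr X => if Req_EM_T (sX s X) 0 then true else false
           end.

Definition is_policy (F V O : Type) (pi : state F V -> option O) : Prop :=
  forall s s', is_state s -> is_state s' ->
    (forall x, bool_state s x = bool_state s' x) -> pi s = pi s'.

Definition qnp_pi_traj (F V O : Type) (Q : qnp F V O) (pi : state F V -> option O)
    (s : nat -> state F V) : Prop :=
  qinitial Q (s 0%nat) /\
  (forall i, exists a, pi (s i) = Some a /\ qapplicable Q a (s i) /\
                       qsucc Q a (s i) (s (S i))) /\
  (exists eps, 0 < eps /\ eps_traj s eps).

(** * FOND problems over atoms A, actions Act.
    Literals are pairs (atom, polarity); effects of an action are a list of
    alternatives E_1 | ... | E_k, each a list of literals. *)
Record fond (A Act : Type) := {
  fI : list (A * bool);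
  fG : list (A * bool);
  fPre : Act -> list (A * bool);
  fEff : Act -> list (list (A * bool))
}.

Definition f_initial (A Act : Type) (P : fond A Act) (t : A -> bool) : Prop :=
  forall x, t x = true <-> In (x, true) (fI P).

Definition f_sat (A : Type) (t : A -> bool) (L : list (A * bool)) : Prop :=
  forall x b, In (x, b) L -> t x = b.

Definition f_apply (A : Type) (t : A -> bool) (E : list (A * bool)) (t' : A -> bool) : Prop :=
  forall x,
    (In (x, true) E -> t' x = true) /\
    (In (x, false) E -> ~ In (x, true) E -> t' x = false) /\
    (~ In (x, true) E -> ~ In (x, false) E -> t' x = t x).

Definition f_succ (A Act : Type) (P : fond A Act) (a : Act) (t t' : A -> bool) : Prop :=
  exists E, In E (fEff P a) /\ f_apply t E t'.

Definition fond_pi_traj (A Act : Type) (P : fond A Act) (pol : (A -> bool) -> option Act)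
    (t : nat -> A -> bool) : Prop :=
  f_initial P (t 0%nat) /\
  forall i, exists a, pol (t i) = Some a /\ f_sat (t i) (fPre P a) /\
                      f_succ P a (t i) (t (S i)).

(** * Direct translation T_D(Q): atoms F + V, inr X standing for p_{X=0}. *)
Definition tr_flit (F V : Type) (l : flit F) : (F + V) * bool :=
  match l with FPos p => (inl p, true) | FNeg p => (inl p, false) end.

Definition tr_lit (F V : Type) (l : lit F V) : (F + V) * bool :=
  match l with
  | LF l => tr_flit V l
  | LV (VZero X) => (inr X, true)
  | LV (VPos X) => (inr X, false)
  end.

(** Combine deterministic effects with the nondeterministic Dec effects
    (cross product of the independent choices). *)
Definition td_effs (F V : Type) (base : list ((F + V) * bool)) (N : list (V * neff))
  : list (list ((F + V) * bool)) :=
  fold_right (fun e acc =>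
     match e with
     | (X, Inc) => map (cons (inr X, false)) acc
     | (X, Dec) => map (cons (inr X, false)) acc ++ map (cons (inr X, true)) acc
     end) [base] N.

Definition T_D (F V O : Type) (Q : qnp F V O) : fond (F + V) O :=
  {| fI := map (@tr_lit F V) (qI Q);
     fG := map (@tr_lit F V) (qG Q);
     fPre := fun a => map (@tr_lit F V) (qPre Q a);
     fEff := fun a => td_effs (map (@tr_flit F V) (qEff Q a)) (qN Q a) |}.

(** A canonical state with a given boolean state; pi is used on T_D(Q) via it
    (well defined since pi only depends on the boolean state). *)
Definition lift (F V : Type) (t : F + V -> bool) : state F V :=
  {| sP := fun p => t (inl p); sX := fun X => if t (inr X) then 0 else 1 |}.

Definition td_policy (F V O : Type) (pi : state F V -> option O) : (F + V -> bool) -> option O :=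
  fun t => pi (lift t).

(* Main.v *)
Require Import Defs.
From Stdlib Require Import Reals List FinFun Lra Classical.
Import ListNotations.
Open Scope R_scope.
Set Implicit Arguments.

Definition gsel (F V : Type) (s' : state F V) (e : V * neff) : (F + V) * bool :=
  (inr (fst e), match snd e with Inc => false | Dec => bool_state s' (inr (fst e)) end).

Lemma td_in (F V : Type) (g : V * neff -> (F + V) * bool) base N :
  (forall e, fst (g e) = inr (fst e) /\ (snd e = Inc -> snd (g e) = false)) ->
  In (map g N ++ base) (td_effs base N).
Proof.
  intros Hg. induction N as [|[X e] N IH]; simpl. left; reflexivity.
  destruct (Hg (X, e)) as [H1 H2]; simpl in H1, H2.
  destruct (g (X, e)) as [a b] eqn:E. simpl in H1; subst a.
  destruct e.
  - specialize (H2 eq_refl); simpl in H2; subst b. apply in_map. exact IH.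
  - apply in_or_app. destruct b; [right|left]; apply in_map; exact IH.
Qed.

Lemma in_tr_inl (F V : Type) (L : list (flit F)) p b :
  In (inl p, b) (map (@tr_flit F V) L) <-> In (if b then FPos p else FNeg p) L.
Proof.
  rewrite in_map_iff. split.
  - intros [l [Hl Hin]]. destruct l; simpl in Hl; inversion Hl; subst; exact Hin.
  - intros H. exists (if b then FPos p else FNeg p). destruct b; simpl; auto.
Qed.

Lemma in_tr_inr (F V : Type) (L : list (flit F)) X b :
  ~ In (inr X, b) (map (@tr_flit F V) L).
Proof.
  rewrite in_map_iff. intros [l [Hl _]]. destruct l; simpl in Hl; discriminate.
Qed.

Lemma in_g_inl (F V : Type) (s' : state F V) N p b :
  ~ In (inl p, b) (map (gsel s') N).
Proof. rewrite in_map_iff. intros [e [He _]]. unfold gsel in He. discriminate. Qed.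

Lemma in_g_inr (F V : Type) (s' : state F V) N X b :
  In (inr X, b) (map (gsel s') N) <->
  exists e, In (X, e) N /\ b = match e with Inc => false | Dec => bool_state s' (inr X) end.
Proof.
  rewrite in_map_iff. split.
  - intros [[Y e] [He Hin]]. unfold gsel in He; simpl in He. inversion He; subst.
    exists e; auto.
  - intros [e [Hin ->]]. exists (X, e). split; auto.
Qed.

Lemma part1 (F V O : Type) (Q : qnp F V O) (pi : state F V -> option O)
          (s : nat -> state F V) :
     wf_qnp Q -> is_policy pi -> qnp_pi_traj Q pi s ->
     fond_pi_traj (T_D Q) (td_policy pi) (fun i => bool_state (s i)).
Proof.
  intros _ Hpol [Hinit [Hstep _]].
  assert (Hst : forall i, is_state (s i)).
  { intros [|i]. exact (proj1 Hinit). destruct (Hstep i) as [a [_ [_ [H _]]]]. exact H. }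
  split.
  - destruct Hinit as [Hs0 [Hsat [Hcwp Hcwx]]].
    intros [p|X]; simpl; unfold fI, T_D; simpl.
    + split.
      * intros H. apply in_map_iff. exists (LF (FPos p)). split; auto.
        destruct (classic (In (LF (FPos p)) (qI Q))) as [h|h]; auto.
        rewrite (Hcwp p h) in H; discriminate.
      * intros H. apply in_map_iff in H. destruct H as [l [Hl Hin]].
        destruct l as [[q|q]|[Y|Y]]; simpl in Hl; inversion Hl; subst.
        exact (Hsat _ Hin).
    + split.
      * intros H. destruct (Req_EM_T (sX (s 0%nat) X) 0) as [e|e]; [|discriminate].
        apply in_map_iff. exists (LV (VZero X)). split; auto.
        destruct (classic (In (LV (VZero X)) (qI Q))) as [h|h]; auto.
        exfalso; exact (Hcwx X h e).
      * intros H. apply in_map_iff in H. destruct H as [l [Hl Hin]].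
        destruct l as [[q|q]|[Y|Y]]; simpl in Hl; inversion Hl; subst.
        pose proof (Hsat _ Hin) as h; simpl in h.
        destruct (Req_EM_T (sX (s 0%nat) X) 0); congruence.
  - intros i. destruct (Hstep i) as [a [Ha [Happ Hsucc]]].
    exists a. split; [|split].
    + unfold td_policy. rewrite <- Ha. apply Hpol.
      * intros X; unfold lift; simpl. destruct (Req_EM_T (sX (s i) X) 0); lra.
      * apply Hst.
      * intros [p|X]; simpl; auto.
        destruct (Req_EM_T (sX (s i) X) 0) as [e|e]; simpl;
        destruct (Req_EM_T _ 0); auto; try lra.
    + intros x b Hin. simpl in Hin. apply in_map_iff in Hin.
      destruct Hin as [l [Hl Hin]]. pose proof (Happ _ Hin) as h.
      destruct l as [[q|q]|[Y|Y]]; simpl in Hl; inversion Hl; subst; simpl in h |- *;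
        auto; destruct (Req_EM_T (sX (s i) Y) 0); auto; lra.
    + destruct Hsucc as [Hs' [HP1 [HP2 [HP3 HN]]]].
      exists (map (gsel (s (S i))) (qN Q a) ++ map (@tr_flit F V) (qEff Q a)).
      split.
      * simpl. apply td_in. intros [X e]; simpl; split; auto. intros ->; auto.
      * intros [p|X]; repeat split.
        -- intros H. apply in_app_or in H. destruct H as [H|H].
           exfalso; exact (in_g_inl _ _ _ _ H).
           apply in_tr_inl in H. simpl. apply HP1; exact H.
        -- intros H H'. apply in_app_or in H. destruct H as [H|H].
           exfalso; exact (in_g_inl _ _ _ _ H).
           apply in_tr_inl in H. simpl. apply HP2; auto.
           intros h; apply H'; apply in_or_app; right; apply in_tr_inl; exact h.
        -- intros H H'. simpl. apply HP3.
           intros h; apply H; apply in_or_app; right; apply in_tr_inl; exact h.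
           intros h; apply H'; apply in_or_app; right; apply in_tr_inl; exact h.
        -- intros H. apply in_app_or in H. destruct H as [H|H].
           2: exfalso; exact (in_tr_inr _ _ _ H).
           apply in_g_inr in H. destruct H as [e [Hin Hb]].
           destruct e; [discriminate|]. symmetry; exact Hb.
        -- intros H H'. apply in_app_or in H. destruct H as [H|H].
           2: exfalso; exact (in_tr_inr _ _ _ H).
           apply in_g_inr in H. destruct H as [e [Hin Hb]].
           destruct e.
           ++ destruct (HN X) as [h1 _]. specialize (h1 Hin). pose proof (Hst i X).
              simpl. destruct (Req_EM_T (sX (s (S i)) X) 0); auto; lra.
           ++ symmetry; exact Hb.
        -- intros H H'. simpl. destruct (HN X) as [_ [_ h]].
           rewrite h. reflexivity.
           ++ intros hi. apply H'. apply in_or_app; left. apply in_g_inr. exists Inc; split; auto.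
           ++ intros hi. destruct (bool_state (s (S i)) (inr X)) eqn:E;
              [apply H|apply H']; apply in_or_app; left; apply in_g_inr; exists Dec; split; auto.
Qed.

Definition Qex : qnp Empty_set unit unit :=
  {| qI := [LV (VPos tt)]; qG := []; qPre := fun _ => [LV (VPos tt)];
     qEff := fun _ => []; qN := fun _ => [(tt, Dec)] |}.

Definition piex : state Empty_set unit -> option unit := fun _ => Some tt.

Lemma part2 : exists (F V O : Type) (Q : qnp F V O) (pi : state F V -> option O)
          (t : nat -> F + V -> bool),
     wf_qnp Q /\ is_policy pi /\ fond_pi_traj (T_D Q) (td_policy pi) t /\
     ~ (exists s : nat -> state F V,
          qnp_pi_traj Q pi s /\ forall i x, bool_state (s i) x = t i x).
Proof.
  exists Empty_set, unit, unit, Qex, piex, (fun _ _ => false).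
  split; [|split; [|split]].
  - repeat split.
    + exists []. intros x; destruct x.
    + exists [tt]. intros []; simpl; auto.
    + exists [tt]. intros []; simpl; auto.
    + intros p [h _]; simpl in h; destruct h as [h|h]; [discriminate|exact h].
    + intros X [h1 h2]; simpl in h1; destruct h1 as [h|h]; [discriminate|exact h].
    + intros p [h _]; exact h.
    + intros X [h _]; exact h.
    + intros a; simpl. constructor. simpl; auto. constructor.
    + intros a X h. simpl in h. destruct h as [h|[]]. inversion h; subst. simpl; auto.
  - intros s s' _ _ _. reflexivity.
  - split.
    + intros x; simpl. split; [discriminate|]. intros [h|[]]. discriminate.
    + intros i. exists tt. split; [reflexivity|split].
      * intros x b h. simpl in h. destruct h as [h|[]]. inversion h; subst; reflexivity.
      * exists [(inr tt, false)]. split.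
        -- simpl. auto.
        -- intros x. split; [|split].
           ++ intros [h|[]]; discriminate.
           ++ intros _ _. reflexivity.
           ++ intros _ _. reflexivity.
  - intros [s [[Hinit [Hstep [eps [Heps Htr]]]] Hb]].
    assert (Hnz : forall i, sX (s i) tt <> 0).
    { intros i e. specialize (Hb i (inr tt)). simpl in Hb.
      destruct (Req_EM_T (sX (s i) tt) 0); [discriminate|contradiction]. }
    assert (Hst : forall i, is_state (s i)).
    { intros [|i]. exact (proj1 Hinit). destruct (Hstep i) as [a [_ [_ [H _]]]]. exact H. }
    assert (Hdec : forall i, sX (s (S i)) tt <= sX (s i) tt - eps).
    { intros i. destruct (Hstep i) as [a [_ [_ [_ [_ [_ [_ HN]]]]]]].
      destruct (HN tt) as [_ [hd _]]. specialize (hd (or_introl eq_refl)).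
      destruct (Htr tt i) as [h|[h _]]; [lra| |].
      - rewrite Rabs_left in h; lra.
      - exfalso; apply (Hnz (S i)); auto. }
    assert (Hn : forall n, sX (s n) tt <= sX (s 0%nat) tt - INR n * eps).
    { induction n. simpl; lra. rewrite S_INR. specialize (Hdec n). lra. }
    destruct (INR_unbounded (sX (s 0%nat) tt / eps)) as [n Hn'].
    specialize (Hn n). pose proof (Hst n tt).
    assert (INR n * eps > sX (s 0%nat) tt).
    { apply Rmult_lt_reg_r with (/ eps). apply Rinv_0_lt_compat; lra.
      rewrite Rmult_assoc, Rinv_r by lra. lra. }
    lra.
Qed.

Theorem theorem2 :
  (forall (F V O : Type) (Q : qnp F V O) (pi : state F V -> option O)
          (s : nat -> state F V),
     wf_qnp Q -> is_policy pi -> qnp_pi_traj Q pi s ->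
     fond_pi_traj (T_D Q) (td_policy pi) (fun i => bool_state (s i)))
  /\
  (exists (F V O : Type) (Q : qnp F V O) (pi : state F V -> option O)
          (t : nat -> F + V -> bool),
     wf_qnp Q /\ is_policy pi /\ fond_pi_traj (T_D Q) (td_policy pi) t /\
     ~ (exists s : nat -> state F V,
          qnp_pi_traj Q pi s /\ forall i x, bool_state (s i) x = t i x)).
Proof.
  split. { exact part1. } exact part2.
Qed.
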